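(* Let $\mathcal{E}:\mathcal{S}(\mathcal{H}_1)\otimes\mathcal{S}(\mathcal{H}_2)\to\mathcal{S}(\mathcal{H}_1)$ be any channel such that $\Delta\circ\mathcal{E}\circ\Delta=\Delta\circ\mathcal{E}$, where $\Delta(\rho)=\sum_x|x\rangle\langle x|\rho|x\rangle\langle x|$ is the dephasing map in the computational basis. Then for any state $\tau\in\mathcal{S}(\mathcal{H}_2)$, the channel $\mathcal{E}_\tau(\rho):=\mathcal{E}(\rho\otimes\tau)$ cannot implement any coherent unitary exactly.
   Context: A unitary is incoherent if it has the form $\sum_x e^{i\theta_x}|\pi(x)\rangle\langle x|$ for real $\theta_x$ and a permutation $\pi$; otherwise it is coherent. $\mathcal{S}(\mathcal{H})$ denotes the set of density operators on $\mathcal{H}$. *)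

(* Defs.v *)
(* Scalars: an arbitrary numClosedFieldType C (e.g. the
   complex numbers), whose partial order gives 0 <= z iff z is real and >= 0. *)
From HB Require Import structures.
From mathcomp Require Import all_boot all_order all_algebra all_fingroup.
From mathcomp Require Export mxtens.
Set Implicit Arguments. Unset Strict Implicit. Unset Printing Implicit Defensive.
Import Order.TTheory GRing.Theory Num.Theory.
Local Open Scope ring_scope.

Section QDefs.
Variable C : numClosedFieldType.

Definition adjmx {p q : nat} (A : 'M[C]_(p, q)) : 'M[C]_(q, p) :=
  (map_mx (fun z => z^*) A)^T.

Definition psd {N : nat} (A : 'M[C]_N) : Prop :=
  adjmx A = A /\ forall v : 'cV[C]_N, 0 <= (adjmx v *m A *m v) 0 0.

Definition density {N : nat} (rho : 'M[C]_N) : Prop :=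
  psd rho /\ \tr rho = 1.

(* the (a,c) block of X : 'M_(k * N) w.r.t. the factorisation C^k (x) C^N *)
Definition blockmx {k N : nat} (X : 'M[C]_(k * N)) (a c : 'I_k) : 'M[C]_N :=
  \matrix_(p, q) X (mxtens_index (a, p)) (mxtens_index (c, q)).

(* (id_k (x) E) applied to X *)
Definition ampl {N M : nat} (k : nat) (E : 'M[C]_N -> 'M[C]_M)
  (X : 'M[C]_(k * N)) : 'M[C]_(k * M) :=
  \matrix_(i, j) E (blockmx X (mxtens_unindex i).1 (mxtens_unindex j).1)
                   (mxtens_unindex i).2 (mxtens_unindex j).2.

Definition channel {N M : nat} (E : 'M[C]_N -> 'M[C]_M) : Prop :=
  [/\ (forall (a : C) (A B : 'M[C]_N), E (a *: A + B) = a *: E A + E B),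
      (forall (k : nat) (X : 'M[C]_(k * N)), psd X -> psd (ampl E X)) &
      (forall A : 'M[C]_N, \tr (E A) = \tr A)].

Definition dephase {N : nat} (A : 'M[C]_N) : 'M[C]_N :=
  \matrix_(i, j) (if i == j then A i j else 0).

Definition unitary {N : nat} (U : 'M[C]_N) : Prop :=
  U *m adjmx U = 1%:M /\ adjmx U *m U = 1%:M.

(* incoherent unitary: U = sum_x e^{i theta_x} |pi(x)><x|; the phases
   e^{i theta_x} are exactly the scalars of modulus one. *)
Definition incoherent {N : nat} (U : 'M[C]_N) : Prop :=
  exists (pi : 'S_N) (ph : 'I_N -> C),
    (forall x, `|ph x| = 1) /\
    U = \matrix_(i, j) (if i == pi j then ph j else 0).

Definition coherent {N : nat} (U : 'M[C]_N) : Prop :=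
  unitary U /\ ~ incoherent U.

Definition implements {N : nat} (F : 'M[C]_N -> 'M[C]_N) (U : 'M[C]_N) : Prop :=
  forall rho : 'M[C]_N, density rho -> F rho = U *m rho *m adjmx U.

End QDefs.

(* Main.v *)
Require Import Defs.
From HB Require Import structures.
From mathcomp Require Import all_boot all_order all_algebra all_fingroup.
From mathcomp Require Import mxtens.
From mathcomp Require Import ring.
Import Order.TTheory GRing.Theory Num.Theory.
Local Open Scope ring_scope.

Section H.
Variable C : numClosedFieldType.

Lemma adjmxE p q (A : 'M[C]_(p, q)) i j : adjmx A i j = (A j i)^*.
Proof. by rewrite /adjmx !mxE. Qed.

Lemma adjmx_mul p q r (A : 'M[C]_(p, q)) (B : 'M[C]_(q, r)) :
  adjmx (A *m B) = adjmx B *m adjmx A.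
Proof.
apply/matrixP=> i j; rewrite adjmxE !mxE rmorph_sum; apply: eq_bigr => k _.
by rewrite !adjmxE rmorphM mulrC.
Qed.

Lemma adjmxK p q (A : 'M[C]_(p, q)) : adjmx (adjmx A) = A.
Proof. by apply/matrixP=> i j; rewrite !adjmxE conjCK. Qed.

Lemma adjmx1 p : adjmx (1%:M : 'M[C]_p) = 1%:M.
Proof. by apply/matrixP=> i j; rewrite adjmxE !mxE eq_sym; case: (_ == _); rewrite /= ?rmorph1 ?rmorph0. Qed.

Lemma adjmx_tens p q r s (A : 'M[C]_(p, q)) (B : 'M[C]_(r, s)) :
  adjmx (A *t B) = adjmx A *t adjmx B.
Proof. by apply/matrixP=> i j; rewrite adjmxE !mxE rmorphM. Qed.

Lemma psd_conj p q (B : 'M[C]_(p, q)) (Y : 'M[C]_q) :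
  psd Y -> psd (B *m Y *m adjmx B).
Proof.
case=> hY hp; split; first by rewrite !adjmx_mul adjmxK hY mulmxA.
move=> v; have := hp (adjmx B *m v).
by rewrite adjmx_mul adjmxK !mulmxA.
Qed.

Lemma psd1 : psd (1%:M : 'M[C]_1).
Proof.
split; first exact: adjmx1.
move=> v; rewrite mulmx1 !mxE; apply: sumr_ge0 => i _.
by rewrite adjmxE mulrC -normCK exprn_ge0.
Qed.

Lemma psd_rank1 p (u : 'cV[C]_p) : psd (u *m adjmx u).
Proof. by have := @psd_conj _ _ u _ psd1; rewrite mulmx1. Qed.

Lemma psd_cast p q (e : p = q) (A : 'M[C]_p) : psd A -> psd (castmx (e, e) A).
Proof. by subst q; rewrite castmx_id. Qed.

Lemma psd_rank1_tens p q (u : 'cV[C]_p) (tau : 'M[C]_q) :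
  psd tau -> psd ((u *m adjmx u) *t tau).
Proof.
move=> ht.
have h1 : psd ((1%:M : 'M[C]_1) *t tau).
  by rewrite tens_scalar1mx; apply: psd_cast.
have := @psd_conj _ _ (u *t (1%:M : 'M[C]_q)) _ h1.
by rewrite adjmx_tens adjmx1 !tensmx_mul mulmx1 mul1mx mulmx1.
Qed.

Lemma tr_tens p q (A : 'M[C]_p) (B : 'M[C]_q) : \tr (A *t B) = \tr A * \tr B.
Proof. by rewrite /mxtrace mulr_sum; apply: eq_bigr => k _; rewrite mxE. Qed.


Lemma sum_tens p q (F : 'I_(p * q) -> C) :
  \sum_k F k = \sum_(a < p) \sum_(b < q) F (mxtens_index (a, b)).
Proof.
rewrite pair_big /= (reindex (@mxtens_index p q)) /=.
  by apply: eq_bigr => -[a b].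
by exists (@mxtens_unindex p q) => k _; rewrite (mxtens_indexK, mxtens_unindexK).
Qed.

Lemma rank1E p (u : 'cV[C]_p) a c : (u *m adjmx u) a c = u a 0 * (u c 0)^*.
Proof. by rewrite !mxE big_ord1 adjmxE. Qed.

Lemma tr_rank1 p (u : 'cV[C]_p) : \tr (u *m adjmx u) = \sum_i u i 0 * (u i 0)^*.
Proof. by apply: eq_bigr => i _; rewrite rank1E. Qed.

End H.

Section M.
Variables (C : numClosedFieldType) (n m : nat) (E : 'M[C]_(n * m) -> 'M[C]_n).
Hypothesis hE : channel E.
Hypothesis hD : forall rho : 'M[C]_(n * m), density rho ->
          dephase (E (dephase rho)) = dephase (E rho).
Variables (tau : 'M[C]_m).
Hypothesis htau : density tau.
Variable U : 'M[C]_n.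
Hypothesis himp : implements (fun rho : 'M[C]_n => E (rho *t tau)) U.

Lemma Elin a A B : E (a *: A + B) = a *: E A + E B.
Proof. by case: hE. Qed.

Lemma E0 : E 0 = 0.
Proof. by have := Elin (-1) 0 0; rewrite scaleN1r oppr0 addr0 => ->; rewrite scaleN1r addNr. Qed.

Lemma Esum (c : 'I_n -> C) (M : 'I_n -> 'M[C]_(n * m)) :
  E (\sum_p c p *: M p) = \sum_p c p *: E (M p).
Proof.
apply: (big_ind2 (fun x y => E x = y)); first exact: E0.
  by move=> x1 x2 y1 y2 <- <-; have := Elin 1 x1 y1; rewrite !scale1r.
by move=> p _; have := Elin (c p) (M p) 0; rewrite !addr0 E0 addr0.
Qed.

Lemma dens_rank1 (u : 'cV[C]_n) : \tr (u *m adjmx u) = 1 -> density (u *m adjmx u).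
Proof. by move=> h; split => //; apply: psd_rank1. Qed.

Lemma dens_tens (u : 'cV[C]_n) : \tr (u *m adjmx u) = 1 ->
  density ((u *m adjmx u) *t tau).
Proof.
move=> h; case: htau => ht1 ht2; split; first exact: psd_rank1_tens.
by rewrite tr_tens h ht2 mulr1.
Qed.

Lemma Ediag (X : 'M[C]_(n * m)) i : density X -> E (dephase X) i i = E X i i.
Proof.
move=> dX; have := congr1 (fun M : 'M[C]_n => M i i) (hD _ dX).
by rewrite /dephase !mxE eqxx.
Qed.

Definition ket (p : 'I_n) : 'cV[C]_n := delta_mx p 0.

Lemma tr_ket p : \tr (ket p *m adjmx (ket p)) = 1.
Proof.
rewrite tr_rank1 (bigD1 p) //= big1 ?addr0.
  by rewrite /ket !mxE !eqxx /= conjC1 mulr1.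
by move=> k hk; rewrite /ket !mxE (negbTE hk) mul0r.
Qed.

Lemma deph_decomp (u : 'cV[C]_n) :
  dephase ((u *m adjmx u) *t tau) =
  \sum_p (u p 0 * (u p 0)^*) *: dephase ((ket p *m adjmx (ket p)) *t tau).
Proof.
apply/matrixP => I J; rewrite summxE.
case: (mxtens_indexP I) => a b; case: (mxtens_indexP J) => a' b'.
have eqI : (mxtens_index (a, b) == mxtens_index (a', b')) = ((a, b) == (a', b')).
  exact: (can_eq (@mxtens_indexK _ _)).
have [e|ne] := eqVneq (a, b) (a', b').
  case: e => <- <-; rewrite /dephase mxE eqxx tensmxE rank1E.
  rewrite (bigD1 a) //= big1 ?addr0.
    by rewrite !mxE eqxx !mxtens_indexK /= big_ord1 adjmxE /ket !mxE !eqxx /= conjC1 !mul1r.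
  move=> k hk; rewrite !mxE eqxx !mxtens_indexK /= big_ord1 adjmxE /ket !mxE eq_sym (negbTE hk) /=.
  by rewrite !mul0r mulr0.
rewrite /dephase mxE eqI (negbTE ne) big1 // => k _; rewrite !mxE eqI.
by rewrite (negbTE ne) mulr0.
Qed.

Lemma key (u : 'cV[C]_n) i : \tr (u *m adjmx u) = 1 ->
  (U *m u) i 0 * ((U *m u) i 0)^* =
  \sum_p (u p 0 * (u p 0)^*) * (U i p * (U i p)^*).
Proof.
move=> h.
have -> : (U *m u) i 0 * ((U *m u) i 0)^* = (U *m (u *m adjmx u) *m adjmx U) i i.
  by rewrite -rank1E adjmx_mul !mulmxA.
rewrite -himp; last exact: dens_rank1.
rewrite -Ediag; last exact: dens_tens.
rewrite deph_decomp Esum summxE; apply: eq_bigr => p _.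
rewrite mxE Ediag; last by apply: dens_tens; exact: tr_ket.
rewrite himp; last by apply: dens_rank1; exact: tr_ket.
rewrite mulmxA -(mulmxA (U *m ket p)) -adjmx_mul rank1E.
by rewrite /ket -colE !mxE.
Qed.


Lemma sum2 (g : 'I_n -> C) x y : x != y ->
  (forall p, p != x -> p != y -> g p = 0) -> \sum_p g p = g x + g y.
Proof.
move=> xy h; rewrite (bigD1 x) //= (bigD1 y) 1?eq_sym //= big1 ?addr0 //.
by move=> p /andP [px py]; apply: h.
Qed.

Lemma cross c x y i : c * c^* = 1 -> x != y ->
  c * ((U i x)^* * U i y) + c^* * (U i x * (U i y)^*) = 0.
Proof.
move=> hc xy.
set s := sqrtC (2^-1 : C).
have ss : s * s^* = 2^-1.
  by rewrite geC0_conj ?sqrtC_ge0 ?invr_ge0 ?ler0n // -expr2 sqrtCK.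
set u := s *: (ket x + c *: ket y).
have ue p : u p 0 = s * ((p == x)%:R + c * (p == y)%:R).
  by rewrite /u /ket !mxE !eqxx !andbT.
have Uu : (U *m u) i 0 = s * (U i x + c * U i y).
  by rewrite /u -scalemxAr mulmxDr -scalemxAr /ket -!colE !mxE.
have yx : y != x by rewrite eq_sym.
have tr1 : \tr (u *m adjmx u) = 1.
  rewrite tr_rank1 (@sum2 _ x y xy); last first.
    by move=> p px py; rewrite ue (negbTE px) (negbTE py) /= !(mulr0n, mulr0, addr0, mul0r).
  rewrite !ue !eqxx (negbTE xy) (negbTE yx) !rmorphM !rmorphD !rmorphM /= !conjC1.
  rewrite !rmorph_nat.
  transitivity (s * s^* * (1 + c * c^*)); first by rewrite /=; ring.
  by rewrite ss hc mulVf // pnatr_eq0.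
have := @key u i tr1.
rewrite Uu (@sum2 _ x y xy); last by move=> p px py; rewrite ue (negbTE px) (negbTE py) /= !(mulr0n, mulr0, addr0, mul0r).
rewrite !ue !eqxx (negbTE xy) (negbTE yx) !rmorphM !rmorphD !rmorphM /= !conjC1 !rmorph_nat /=.
move=> h.
have e : s * s^* * (c * ((U i x)^* * U i y) + c^* * (U i x * (U i y)^*)) =
   s * (U i x + c * U i y) * (s^* * ((U i x)^* + c^* * (U i y)^*)) -
   (s * (1 + c * 0) * (s^* * (1 + c^* * 0)) * (U i x * (U i x)^*) +
    s * (0 + c * 1) * (s^* * (0 + c^* * 1)) * (U i y * (U i y)^*)) by ring.
move: e; rewrite h subrr ss => /eqP.
rewrite mulf_eq0 invr_eq0 pnatr_eq0 /= => /eqP //.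
Qed.

Lemma zero_prod x y i : x != y -> U i x = 0 \/ U i y = 0.
Proof.
move=> xy.
have h11 : 1 * 1^* = 1 :> C by rewrite conjC1 mulr1.
have h1 := @cross 1 x y i h11 xy.
have hi : 'i * 'i^* = 1 :> C by rewrite conjCi mulrN -expr2 sqrCi opprK.
have h2 := @cross 'i x y i hi xy.
rewrite conjC1 !mul1r in h1; rewrite conjCi in h2.
set z := (U i x)^* * U i y in h1 h2; set w := U i x * (U i y)^* in h1 h2.
have hzw : 'i * (z - w) = 0 by rewrite mulrBr -[RHS]h2 mulNr.
move/eqP: hzw; rewrite mulf_eq0 (negbTE (neq0Ci C)) /= subr_eq0 => /eqP zw.
have : z *+ 2 = 0 by rewrite mulr2n {2}zw.
move/eqP; rewrite mulrn_eq0 /= mulf_eq0 conjC_eq0 => /orP [] /eqP; by [left | right].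
Qed.

Lemma incoh : unitary U -> incoherent U.
Proof.
case=> _ hUU'.
have col1 j : \sum_i (U i j)^* * U i j = 1.
  have := congr1 (fun M : 'M[C]_n => M j j) hUU'; rewrite !mxE eqxx /= => h; apply: etrans h.
  by apply: eq_bigr => i _; rewrite adjmxE.
pose g j := odflt j [pick i | U i j != 0].
have gP j : U (g j) j != 0.
  rewrite /g; case: pickP => [i //|h0].
  suff : \sum_i (U i j)^* * U i j = 0 by rewrite col1 => /eqP; rewrite oner_eq0.
  by apply: big1 => i _; have := h0 i => /= /negbFE/eqP ->; rewrite mulr0.
have ginj : injective g.
  move=> j k e; apply/eqP; apply/negPn/negP => jk.
  case: (@zero_prod j k (g j) jk) => h; first by move/eqP: (gP j); rewrite h.
  by move/eqP: (gP k); rewrite -e h.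
pose pi : 'S_n := perm ginj.
have off i j : i != pi j -> U i j = 0.
  move=> ne; pose k := (pi^-1)%g i.
  have hk : U i k != 0.
    have e1 : pi k = g k by rewrite permE.
    have e2 : pi k = i by rewrite /k permKV.
    by have := gP k; rewrite -e1 e2.
  have kj : k != j.
    by apply/eqP => kj; move: ne; rewrite -kj /k permKV eqxx.
  by case: (@zero_prod k j i kj) => h //; move/eqP: hk; rewrite h.
exists pi, (fun j => U (pi j) j); split.
  move=> j; have := col1 j; rewrite (bigD1 (pi j)) //= big1 ?addr0; last first.
    by move=> i ne; rewrite off ?mulr0.
  rewrite mulrC -normCK => /eqP; rewrite sqrf_eq1 => /orP [/eqP //|/eqP h].
  by have := normr_ge0 (U (pi j) j); rewrite h ler0N1.
apply/matrixP => i j; rewrite mxE; case: eqP => [->//|/eqP ne]; exact: off.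
Qed.

End M.

Theorem lemma5 (C : numClosedFieldType) (n m : nat)
  (E : 'M[C]_(n * m) -> 'M[C]_n)
  (hE : channel E)
  (hD : forall rho : 'M[C]_(n * m), density rho ->
          dephase (E (dephase rho)) = dephase (E rho))
  (tau : 'M[C]_m) (htau : density tau) :
  forall U : 'M[C]_n, coherent U ->
    ~ implements (fun rho : 'M[C]_n => E (rho *t tau)) U.
Proof.
move=> U [hU hnot] himp; apply: hnot.
exact: (@incoh C n m E hE hD tau htau U himp hU).
Qed.
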